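(* Let $q$ be a prime power with $q\equiv 1\pmod 3$, let $n$ be an integer, and let $\Lambda:=\mathbb{F}_q\setminus\{-1,-\xi,-\xi^2\}$. Then $$\delta^n\sum_{a\in\Lambda}\eta\Big(\frac{\xi+a}{1+a}\Big)+\delta^{2n}\sum_{a\in\Lambda}\eta^2\Big(\frac{\xi+a}{1+a}\Big)=\epsilon_1+\epsilon_2,$$ where $\epsilon_1=-2$ if $q-3n\equiv 1\pmod 9$ and $\epsilon_1=1$ otherwise, and $\epsilon_2=-2$ if $n\equiv 0\pmod 3$ and $\epsilon_2=1$ otherwise.
   Context: Let $q\equiv 1\pmod 3$, let $\xi\in\mathbb{F}_q$ be a fixed cube root of unity with $\xi\neq 1$, and let $\delta\in\mathbb{C}$ be a fixed cube root of unity with $\delta\neq1$. Let $\eta:\mathbb{F}_q\to\mathbb{C}$ be the cubic multiplicative character defined by $\eta(0)=0$ and, for $c\in\mathbb{F}_q^*$ and integers $j$, $\eta(c)=\delta^j$ if and only if $c^{\frac{q-1}{3}}=\xi^j$. We write $\eta^2(c)$ for $\eta(c)^2$. *)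

(* Defs.v *)
From HB Require Import structures.
From mathcomp Require Import all_boot all_order all_algebra all_field.
Set Implicit Arguments. Unset Strict Implicit. Unset Printing Implicit Defensive.
Import Order.TTheory GRing.Theory Num.Theory.
Local Open Scope ring_scope.

(* The cubic character eta : F_q -> C attached to (xi, delta):
   eta 0 = 0, and for c <> 0, eta c = delta^j iff c^((q-1)/3) = xi^j.
   Since c^((q-1)/3) is a cube root of unity, it is one of 1, xi, xi^2
   (for j = 0, 1, 2 mod 3), which is what this case distinction unfolds to. *)
Definition cubic_char (F : finFieldType) (xi : F) (delta : algC) (c : F) : algC :=
  if c == 0 then 0
  else let e := c ^+ (#|F|.-1 %/ 3) in
       if e == 1 then 1
       else if e == xi then delta
       else delta ^+ 2.

(* Main.v *)
Require Import Defs.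
From HB Require Import structures.
From mathcomp Require Import all_boot all_order all_algebra all_field.
From mathcomp Require Import zify ring lra.
Import Order.TTheory GRing.Theory Num.Theory.
Local Open Scope ring_scope.

Module Helpers.
Set Implicit Arguments. Unset Strict Implicit.
Lemma expr_mod3 (R : ringType) (x : R) (k : nat) : x ^+ 3 = 1 -> x ^+ k = x ^+ (k %% 3).
Proof.
move=> h; rewrite {1}(divn_eq k 3) exprD mulnC exprM h expr1n mul1r //.
Qed.

Lemma cube_roots (F : fieldType) (xi x : F) : xi ^+ 3 = 1 -> xi != 1 -> x ^+ 3 = 1 ->
  exists i : nat, (i < 3)%N /\ x = xi ^+ i.
Proof.
move=> h3 h1 hx.
have hs : 1 + xi + xi ^+ 2 = 0.
  have : (xi - 1) * (1 + xi + xi ^+ 2) = 0 by rewrite (_ : _ * _ = xi ^+ 3 - 1); [rewrite h3 subrr | ring].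
  by move/eqP; rewrite mulf_eq0 subr_eq0 (negbTE h1) /= => /eqP.
have : (x - 1) * (x - xi) * (x - xi ^+ 2) = 0.
  rewrite (_ : _ * _ = x ^+ 3 - (1 + xi + xi ^+ 2) * x ^+ 2 + (xi * (1 + xi + xi ^+ 2)) * x - xi ^+ 3); last by ring.
  by rewrite hs h3 hx mulr0 !mul0r subr0 addr0 subrr.
move/eqP; rewrite !mulf_eq0 !subr_eq0 => /orP [/orP [] | ] /eqP ->.
- by exists 0%N.
- by exists 1%N; rewrite expr1.
- by exists 2%N.
Qed.
Definition psi (F : fieldType) (xi : F) (delta : algC) (e : F) : algC :=
  if e == 1 then 1 else if e == xi then delta else delta ^+ 2.

Lemma xi_facts (F : fieldType) (xi : F) : xi ^+ 3 = 1 -> xi != 1 ->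
  [/\ xi != 0, xi ^+ 2 != 1 & xi ^+ 2 != xi].
Proof.
move=> h3 h1.
have h0 : xi != 0 by apply/negP => /eqP h; move: h3; rewrite h expr0n /= => /eqP; rewrite eq_sym oner_eq0.
constructor => //; apply/negP => /eqP h.
  by move/eqP: h1; apply; rewrite -h3 exprS h mulr1.
by move/eqP: h1; apply; apply: (mulIf h0); rewrite mul1r -expr2.
Qed.

Lemma psi_exp (F : fieldType) (xi : F) (delta : algC) (k : nat) :
  xi ^+ 3 = 1 -> xi != 1 -> delta ^+ 3 = 1 -> psi xi delta (xi ^+ k) = delta ^+ k.
Proof.
move=> h3 h1 hd; have [h0 h2 h21] := xi_facts h3 h1.
rewrite (@expr_mod3 _ _ k h3) (@expr_mod3 _ _ k hd).
have : (k %% 3 < 3)%N by rewrite ltn_pmod.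
case: (k %% 3)%N => [|[|[|//]]] _; rewrite /psi.
- by rewrite !expr0 eqxx.
- by rewrite !expr1 (negbTE h1) eqxx.
- by rewrite (negbTE h2) (negbTE h21).
Qed.

Lemma cc_exp (F : finFieldType) (xi : F) (delta : algC) (c : F) :
  (#|F| %% 3 = 1)%N -> xi ^+ 3 = 1 -> xi != 1 -> delta ^+ 3 = 1 -> c != 0 ->
  exists i : nat, (i < 3)%N /\ c ^+ (#|F|.-1 %/ 3) = xi ^+ i /\ cubic_char xi delta c = delta ^+ i.
Proof.
move=> hq h3 h1 hd hc.
have hm : (3 * (#|F|.-1 %/ 3) = #|F|.-1)%N.
  have q0 : (0 < #|F|)%N by apply/card_gt0P; exists 0.
  rewrite mulnC divnK //; lia.
have hc3 : (c ^+ (#|F|.-1 %/ 3)) ^+ 3 = 1.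
  rewrite -exprM mulnC hm.
  apply: (mulIf hc); rewrite mul1r -exprSr prednK ?expf_card //.
  by apply/card_gt0P; exists 0.
have [i [hi e]] := cube_roots h3 h1 hc3.
exists i; split => //; split => //.
by rewrite /cubic_char (negbTE hc) /= -/(psi xi delta _) e psi_exp.
Qed.
Lemma cc_psi (F : finFieldType) (xi : F) (delta : algC) (c : F) : c != 0 ->
  cubic_char xi delta c = psi xi delta (c ^+ (#|F|.-1 %/ 3)).
Proof. by move=> hc; rewrite /cubic_char (negbTE hc). Qed.

Lemma cc0 (F : finFieldType) (xi : F) (delta : algC) : cubic_char xi delta 0 = 0.
Proof. by rewrite /cubic_char eqxx. Qed.

Lemma cc_mul (F : finFieldType) (xi : F) (delta : algC) (x y : F) :
  (#|F| %% 3 = 1)%N -> xi ^+ 3 = 1 -> xi != 1 -> delta ^+ 3 = 1 ->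
  cubic_char xi delta (x * y) = cubic_char xi delta x * cubic_char xi delta y.
Proof.
move=> hq h3 h1 hd.
have [->|hx] := eqVneq x 0; first by rewrite mul0r cc0 mul0r.
have [->|hy] := eqVneq y 0; first by rewrite mulr0 cc0 mulr0.
have [i [_ [ei ci]]] := cc_exp hq h3 h1 hd hx.
have [j [_ [ej cj]]] := cc_exp hq h3 h1 hd hy.
by rewrite cc_psi ?mulf_neq0 // exprMn ei ej -exprD psi_exp // ci cj exprD.
Qed.

Lemma char_sum0 (F : finFieldType) (chi : F -> algC) (g : F) :
  (forall x y, chi (x * y) = chi x * chi y) -> g != 0 -> chi g != 1 ->
  \sum_(c : F) chi c = 0.
Proof.
move=> hm hg h1.
have e : \sum_(c : F) chi c = chi g * \sum_(c : F) chi c.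
  rewrite {1}(reindex_inj (mulfI hg)) /= mulr_sumr.
  by apply: eq_bigr => c _; rewrite hm.
have : (1 - chi g) * \sum_(c : F) chi c = 0 by rewrite mulrBl mul1r -e subrr.
by move/eqP; rewrite mulf_eq0 subr_eq0 eq_sym (negbTE h1) /= => /eqP.
Qed.

Lemma exists_noncube (F : finFieldType) :
  (#|F| %% 3 = 1)%N -> exists g : F, g != 0 /\ g ^+ (#|F|.-1 %/ 3) != 1.
Proof.
move=> hq.
have q0 : (0 < #|F|)%N by (apply/card_gt0P; exists (0:F)%R).
have m0 : (0 < #|F|.-1 %/ 3)%N.
  have : (0 < #|predC1 (0:F)%R|)%N by (apply/card_gt0P; exists (1:F)%R; rewrite !inE oner_eq0).
  rewrite cardC1 => h.
move: h hq; set q := #|F| => h hq; lia.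
case: (boolP [exists g : F, (g != 0) && (g ^+ (#|F|.-1 %/ 3) != 1)]) => [/existsP [g /andP [h1 h2]] | /existsPn hall].
  by exists g.
exfalso.
have hu : all (#|F|.-1 %/ 3).-unity_root (enum (predC1 (0:F)%R)).
  apply/allP => x; rewrite mem_enum !inE => hx; rewrite unity_rootE.
  by move: (hall x); rewrite hx /= negbK.
have := max_unity_roots m0 hu (enum_uniq _).
rewrite -cardE cardC1 => h0; move: h0 m0 hq; set q := #|F| => h0 m0 hq; lia.
Qed.
Lemma mobius_sum (F : finFieldType) (xi : F) (f : F -> algC) :
  xi ^+ 3 = 1 -> xi != 1 ->
  \sum_(a : F | a \notin [:: -1; -xi; -(xi ^+ 2)]) f ((xi + a) / (1 + a))
  = \sum_(b : F) f b - (f 1 + f 0 + f (- (xi ^+ 2))).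
Proof.
move=> h3 h1; have [h0 h2 h21] := xi_facts h3 h1.
have hx1 : xi - 1 != 0 by rewrite subr_eq0.
pose T a := if a == -1 then 1 else (xi + a) / (1 + a).
pose S b := if b == 1 then -1 else (xi - b) / (b - 1).
have TK : cancel T S.
  move=> a; rewrite /T; have [->|ha] := eqVneq a (-1); first by rewrite /S eqxx.
  have ha1 : 1 + a != 0 by rewrite addr_eq0 eq_sym eqr_oppLR.
  have hT : (xi + a) / (1 + a) != 1.
    apply/negP => /eqP e; move/eqP: hx1; apply.
    have : xi + a = 1 + a by rewrite -[LHS](mulfVK ha1) e mul1r.
    by move/addIr => ->; rewrite subrr.
  rewrite /S (negbTE hT).
  field; rewrite ha1 /= (_ : xi + a + -1 * (1 + a) = xi - 1) //; ring.
have eT : \sum_(b : F) f b = \sum_(a : F) f (T a) := reindex_inj (can_inj TK).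
have hn1 : - xi != - 1 by rewrite eqr_opp.
have hn2 : - (xi ^+ 2) != - 1 by rewrite eqr_opp.
have hn12 : - xi != - (xi ^+ 2) by rewrite eqr_opp eq_sym.
have hu : uniq [:: -1; -xi; -(xi ^+ 2)].
  by rewrite /= !inE negb_or eq_sym hn1 eq_sym hn2 hn12.
rewrite eT [X in _ = X - _](bigID (fun a => a \in [:: -1; -xi; -(xi ^+ 2)])) /= -big_uniq //.
rewrite !big_cons big_nil.
have -> : T (-1) = 1 by rewrite /T eqxx.
have -> : T (-xi) = 0 by rewrite /T (negbTE hn1) subrr mul0r.
have -> : T (-(xi ^+ 2)) = -(xi ^+ 2).
  rewrite /T (negbTE hn2).
  have hd : 1 - xi ^+ 2 != 0 by rewrite subr_eq0 eq_sym.
  rewrite (_ : xi + - xi ^+ 2 = - xi ^+ 2 * (1 - xi ^+ 2)) ?mulfK //.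
  rewrite (_ : - xi ^+ 2 * (1 - xi ^+ 2) = - xi ^+ 2 + xi ^+ 3 * xi); last by ring.
  rewrite h3 mul1r; ring.
set s := \sum_(i | _) f (T i).
change (\sum_(a | a \notin [:: -1; -xi; -(xi ^+ 2)]) f ((xi + a) / (1 + a)) = f 1 + (f 0 + (f (-(xi ^+ 2)) + 0)) + s - (f 1 + f 0 + f (-(xi ^+ 2)))).
rewrite addr0 addrA [_ + s]addrC addrK; apply: eq_bigr => a ha.
rewrite /T; have [ea|//] := eqVneq a (-1).
by move: ha; rewrite ea !inE eqxx.
Qed.
Lemma int_pow3 (delta : algC) (z : int) : delta ^+ 3 = 1 ->
  exists k : nat, (z %% 3)%Z = k%:Z /\ delta ^ z = delta ^+ k.
Proof.
move=> hd.
have d0 : delta != 0 by apply/negP => /eqP h; move: hd; rewrite h expr0n /= => /eqP; rewrite eq_sym oner_eq0.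
have hk : (0 <= z %% 3)%Z by lia.
exists (absz (z %% 3)%Z); split; first by rewrite gez0_abs.
rewrite {1}(divz_eq z 3) expfzDr // -exprz_exp exprzAC.
rewrite (_ : delta ^ 3 = 1) // exp1rz mul1r.
by rewrite -{1}(gez0_abs hk).
Qed.

Lemma s_val (delta : algC) (t : nat) : delta ^+ 3 = 1 -> delta != 1 ->
  delta ^+ t + delta ^+ (t * 2) = if (t %% 3 == 0)%N then 2 else -1.
Proof.
move=> hd h1.
have hs : 1 + delta + delta ^+ 2 = 0.
  have : (delta - 1) * (1 + delta + delta ^+ 2) = 0 by rewrite (_ : _ * _ = delta ^+ 3 - 1); [rewrite hd subrr | ring].
  by move/eqP; rewrite mulf_eq0 subr_eq0 (negbTE h1) /= => /eqP.
rewrite (@expr_mod3 _ _ t hd) (@expr_mod3 _ _ (t * 2) hd) -modnMml.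
have : (t %% 3 < 3)%N by rewrite ltn_pmod.
case: (t %% 3)%N => [|[|[|//]]] _ /=.
- by rewrite mod0n expr0.
- rewrite (_ : (1 * 2) %% 3 = 2)%N // expr1 -(subr0 (delta + _)) -hs; ring.
- rewrite (_ : (2 * 2) %% 3 = 1)%N // expr1 -(subr0 (delta ^+ 2 + _)) -hs; ring.
Qed.
End Helpers.
Import Helpers.
Theorem lemma4p2 (F : finFieldType) (xi : F) (delta : algC) (n : int)
  (hq : (#|F| %% 3 = 1)%N)
  (hxi3 : xi ^+ 3 = 1) (hxi1 : xi != 1)
  (hd3 : delta ^+ 3 = 1) (hd1 : delta != 1) :
  let eta := cubic_char xi delta in
  let eps1 : algC := if (#|F|%:Z - 3 * n == 1 %[mod 9])%Z then -2 else 1 in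
  let eps2 : algC := if (3 %| n)%Z then -2 else 1 in
  delta ^ n * (\sum_(a : F | a \notin [:: -1; -xi; -(xi ^+ 2)])
                  eta ((xi + a) / (1 + a)))
  + delta ^ (2 * n) * (\sum_(a : F | a \notin [:: -1; -xi; -(xi ^+ 2)])
                  (eta ((xi + a) / (1 + a))) ^+ 2)
  = eps1 + eps2.
Proof.
move=> eta eps1 eps2.
set m := (#|F|.-1 %/ 3)%N.
have [_ hd2 _] := xi_facts hd3 hd1.
have hmul : forall x y, eta (x * y) = eta x * eta y by move=> x y; exact: cc_mul.
rewrite (mobius_sum (fun b => eta b)) // (mobius_sum (fun b => eta b ^+ 2)) //.
have [g [g0 gm]] := exists_noncube hq.
have [i [hi [gi ei]]] := cc_exp hq hxi3 hxi1 hd3 g0.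
have i0 : i != 0%N by apply/negP => /eqP i0; move: gm; rewrite gi i0 eqxx.
have S1 : \sum_(b : F) eta b = 0.
  apply: (char_sum0 hmul g0); rewrite /eta ei.
  by move: hi i0; case: i {gi ei} => [|[|[|//]]] //.
have S2 : \sum_(b : F) eta b ^+ 2 = 0.
  apply: (@char_sum0 _ (fun b => eta b ^+ 2) g) => //.
    by move=> x y; rewrite hmul exprMn.
  rewrite /eta ei -exprM.
  move: hi i0; case: i {gi ei} => [|[|[|//]]] // _ _.
  by rewrite (_ : (2 * 2 = 3 + 1)%N) // exprD hd3 mul1r expr1.
have E0 : eta 0 = 0 by exact: cc0.
have E1 : eta 1 = 1 by rewrite /eta cc_psi ?oner_eq0 // expr1n /psi eqxx.
have Em1 : eta (-1) = 1.
  have n1 : (-1 : F) != 0 by rewrite oppr_eq0 oner_eq0.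
  have [j [hj [_ ej]]] := cc_exp hq hxi3 hxi1 hd3 n1.
  have : eta (-1) = eta (-1) ^+ 3.
    by rewrite -{1}(_ : (-1) * (-1) * (-1) = (-1 : F)) ?hmul ?expr3 ?mulrA //; ring.
  rewrite /eta ej -exprM mulnC exprM hd3 expr1n => ->; by [].
have Exi : eta (- (xi ^+ 2)) = delta ^+ (2 * m).
  rewrite -mulN1r hmul Em1 mul1r /eta cc_psi; last first.
    by rewrite expf_neq0 //; have [] := xi_facts hxi3 hxi1.
  by rewrite -exprM psi_exp.
rewrite S1 S2 E0 E1 Exi.
have [k [hk ek]] := int_pow3 n hd3.
rewrite (_ : delta ^ (2 * n) = (delta ^ n) ^+ 2); last by rewrite mulrC -exprz_exp.
rewrite ek -exprM.
rewrite (_ : _ + _ = - (delta ^+ k + delta ^+ (k * 2)) - (delta ^+ (k + 2 * m) + delta ^+ ((k + 2 * m) * 2))); last first.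
  rewrite mulnDl !exprD -exprM (mulnC 2%N m) (mulnC (m * 2)%N 2%N) !exprM; ring.
rewrite !s_val //.
have c1 : (((k + 2 * m) %% 3) == 0)%N = (#|F|%:Z - 3 * n == 1 %[mod 9])%Z.
  have hqm : #|F| = (3 * m + 1)%N by rewrite /m; lia.
  rewrite hqm; apply/idP/idP => /eqP H; apply/eqP; lia.
have c2 : ((k %% 3) == 0)%N = (3 %| n)%Z.
  apply/idP/idP => H; lia.
rewrite c1 c2 /eps1 /eps2.
by case: ifP => _; case: ifP => _; ring.
Qed.
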